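(* Let $d\ge3$, $\mathcal D=\mathbb S_1^{d-1}$, $M\in\mathrm{SL}(d+1,\mathbb R)$, $K=\mathcal G_{\mathcal D}(M)$, and let $(u_1,\vec v_1),\dots,(u_K,\vec v_K)\in\mathcal Q_{\mathcal D}(M)$ satisfy (V1)–(V3). If $1\le i,j\le K$ and either $-1<u_i<u_j\le-1/2$ or $1/2\le u_j<u_i<1$, then the angle between $\vec v_i$ and $\vec v_j$ is greater than $\pi/3$.
   Context: $\mathbb S_1^{d-1}$ is the unit sphere. Row vectors in $\mathbb R^{d+1}$ are written $(u,\vec v)$, $u\in\mathbb R$, $\vec v\in\mathbb R^d$; $\mathbb Z^{d+1}M=\{\vec mM:\vec m\in\mathbb Z^{d+1}\}$. For $\mathcal D\subseteq\mathbb S_1^{d-1}$: $\mathcal Q_{\mathcal D}(M,t)=\{(u,\vec v)\in\mathbb Z^{d+1}M:-t<u<1-t,\ \vec v\in\mathbb R_{>0}\mathcal D\}$ for $t\in(0,1)$; $\mathcal Q_{\mathcal D}(M)=\{(u,\vec v)\in\mathbb Z^{d+1}M:|u|<1,\ \vec v\in\mathbb R_{>0}\mathcal D\}$; $F_{\mathcal D}(M,t)=\min\{|\vec v|:(u,\vec v)\in\mathcal Q_{\mathcal D}(M,t)\}$; $\mathcal F_{\mathcal D}(M)=\{F_{\mathcal D}(M,t):0<t<1\}$, $\mathcal G_{\mathcal D}(M)=|\mathcal F_{\mathcal D}(M)|$. Conditions: (V1) $0<|\vec v_1|<\cdots<|\vec v_K|$; (V2) each $\delta\in\mathcal F_{\mathcal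 D}(M)$ equals $|\vec v_i|$ for some $i$; (V3) for each $i$ there is $t\in(0,1)$ with $(u_i,\vec v_i)\in\mathcal Q_{\mathcal D}(M,t)$ and $|\vec v_i|=F_{\mathcal D}(M,t)$. *)

(* Defs.v *)
From HB Require Import structures.
From mathcomp Require Import all_boot all_order all_algebra.
From mathcomp Require Import all_classical all_reals all_analysis.
From mathcomp Require Import Rstruct Rstruct_topology.
Set Implicit Arguments. Unset Strict Implicit. Unset Printing Implicit Defensive.
Import Order.TTheory GRing.Theory Num.Theory.
Local Open Scope ring_scope.
Local Open Scope classical_set_scope.

Notation RR := Rdefinitions.R.

Definition vdot (d : nat) (v w : 'rV[RR]_d) : RR := \sum_(k < d) v 0 k * w 0 k.
Definition vnorm (d : nat) (v : 'rV[RR]_d) : RR := Num.sqrt (vdot v v).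

Definition vangle (d : nat) (v w : 'rV[RR]_d) : RR :=
  acos (vdot v w / (vnorm v * vnorm w)).

Definition unit_sphere (d : nat) : set 'rV[RR]_d := [set w | vnorm w = 1].

Definition pos_cone (d : nat) (D : set 'rV[RR]_d) : set 'rV[RR]_d :=
  [set v | exists r : RR, 0 < r /\ exists2 w, D w & v = r *: w].

Definition mkvec (d : nat) (u : RR) (v : 'rV[RR]_d) : 'rV[RR]_(1 + d) :=
  row_mx (const_mx u) v.

Definition lattice (d : nat) (M : 'M[RR]_(1 + d)) : set 'rV[RR]_(1 + d) :=
  [set x | exists m : 'rV[int]_(1 + d), x = map_mx (fun z : int => z%:~R) m *m M].

Definition QDt (d : nat) (D : set 'rV[RR]_d) (M : 'M[RR]_(1 + d)) (t : RR)
  (u : RR) (v : 'rV[RR]_d) : Prop :=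
  lattice M (mkvec u v) /\ - t < u < 1 - t /\ pos_cone D v.

Definition QD (d : nat) (D : set 'rV[RR]_d) (M : 'M[RR]_(1 + d))
  (u : RR) (v : 'rV[RR]_d) : Prop :=
  lattice M (mkvec u v) /\ `|u| < 1 /\ pos_cone D v.

Definition isF (d : nat) (D : set 'rV[RR]_d) (M : 'M[RR]_(1 + d)) (t delta : RR)
  : Prop :=
  (exists u v, QDt D M t u v /\ vnorm v = delta) /\
  (forall u v, QDt D M t u v -> delta <= vnorm v).

Definition FD (d : nat) (D : set 'rV[RR]_d) (M : 'M[RR]_(1 + d)) : set RR :=
  [set delta | exists t : RR, 0 < t < 1 /\ isF D M t delta].

(* Main.v *)
Require Import Defs.
From HB Require Import structures.
From mathcomp Require Import all_boot all_order all_algebra.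
From mathcomp Require Import all_classical all_reals all_analysis.
From mathcomp Require Import Rstruct Rstruct_topology.
From mathcomp Require Import ring lra.
Import Order.TTheory GRing.Theory Num.Theory.
Local Open Scope ring_scope.
Local Open Scope classical_set_scope.
Set Implicit Arguments. Unset Strict Implicit.

Section Aux.
Variable d : nat.
Implicit Types x y z : 'rV[RR]_d.

Lemma vdotDl x y z : vdot (x + y) z = vdot x z + vdot y z.
Proof. by rewrite /vdot -big_split; apply: eq_bigr => k _; rewrite mxE mulrDl. Qed.
Lemma vdotC x y : vdot x y = vdot y x.
Proof. by apply: eq_bigr => k _; rewrite mulrC. Qed.
Lemma vdotDr x y z : vdot z (x + y) = vdot z x + vdot z y.
Proof. by rewrite vdotC vdotDl !(vdotC z). Qed.
Lemma vdotZl k x z : vdot (k *: x) z = k * vdot x z.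
Proof. by rewrite /vdot mulr_sumr; apply: eq_bigr => i _; rewrite mxE mulrA. Qed.
Lemma vdotZr k x z : vdot z (k *: x) = k * vdot z x.
Proof. by rewrite vdotC vdotZl vdotC. Qed.
Lemma vdotNl x z : vdot (- x) z = - vdot x z.
Proof. by rewrite -scaleN1r vdotZl mulN1r. Qed.
Lemma vdotNr x z : vdot z (- x) = - vdot z x.
Proof. by rewrite vdotC vdotNl vdotC. Qed.
Lemma vdot_ge0 x : 0 <= vdot x x.
Proof. by apply: sumr_ge0 => k _; rewrite -expr2 sqr_ge0. Qed.
Lemma vnorm_sq x : vnorm x ^+ 2 = vdot x x.
Proof. by rewrite /vnorm sqr_sqrtr // vdot_ge0. Qed.
Lemma vnorm_ge0 x : 0 <= vnorm x.
Proof. exact: sqrtr_ge0. Qed.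

Lemma vnorm_gt0 x : x != 0 -> 0 < vnorm x.
Proof.
move=> hx; rewrite lt_neqAle vnorm_ge0 andbT; apply/eqP => h0.
have : vdot x x == 0 by rewrite -vnorm_sq -h0 expr0n.
rewrite /vdot psumr_eq0; last by move=> k _; rewrite -expr2 sqr_ge0.
move=> /allP H; move/eqP: hx; apply; apply/matrixP => i k.
rewrite ord1 mxE; have := H k (mem_index_enum _); rewrite /= -expr2 sqrf_eq0.
by move/eqP.
Qed.

Lemma vnormZ k x : vnorm (k *: x) = `|k| * vnorm x.
Proof.
by rewrite /vnorm vdotZl vdotZr mulrA -expr2 sqrtrM ?sqr_ge0 // sqrtr_sqr.
Qed.

Lemma pos_cone_nz x : x != 0 -> pos_cone (@unit_sphere d) x.
Proof.
move=> hx; have hn := vnorm_gt0 hx.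
exists (vnorm x); split => //; exists ((vnorm x)^-1 *: x).
  rewrite /unit_sphere /= vnormZ ger0_norm ?invr_ge0 ?vnorm_ge0 //.
  by rewrite mulVf // gt_eqF.
by rewrite scalerA divff ?scale1r // gt_eqF.
Qed.
End Aux.

Lemma cos_pi3 : cos (pi / 3) = 1 / 2 :> RR.
Proof.
have hpi := @pi_gt0 RR.
have E : cos (pi / 3 + pi / 3 + pi / 3) = -1 :> RR.
  by rewrite -cospi; congr cos; field.
rewrite !trigo.cosD !trigo.sinD in E.
set c := cos (pi / 3) in E *; set s := sin (pi / 3) in E.
have e1 : s ^+ 2 = 1 - c ^+ 2 by rewrite /s sin2cos2.
have cpos : 0 < c.
  by apply: cos_gt0_pihalf; apply/andP; split; lra.
have : (c + 1) * (2 * c - 1) ^+ 2 = 0.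
  have -> : (c + 1) * (2 * c - 1) ^+ 2 =
    ((c*c - s*s)*c - (s*c + c*s)*s) + 1 + 3*c*(s^+2 - (1 - c^+2)) by ring.
  by rewrite E e1 subrr; ring.
move/eqP; rewrite mulf_eq0 sqrf_eq0 => /orP [/eqP h|/eqP h]; lra.
Qed.

Lemma acos_gt_pi3 (x : RR) : -1 <= x -> x < 1 / 2 -> pi / 3 < acos x.
Proof.
move=> h1 h2; have hpi := @pi_gt0 RR.
have hx : -1 <= x <= 1 by apply/andP; split; lra.
rewrite -ltr_cos; last 2 first.
- by rewrite in_itv /=; apply/andP; split; lra.
- by rewrite in_itv /= acos_ge0 // acos_lepi.
by rewrite cos_pi3 acosK // in_itv.
Qed.

Lemma key d (a b : 'rV[RR]_d) : 0 < vnorm a -> 0 < vnorm b ->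
  ~ (pi / 3 < vangle a b) ->
  vdot (a - b) (a - b) <= vnorm a ^+ 2 + vnorm b ^+ 2 - vnorm a * vnorm b.
Proof.
move=> ha hb hang.
have hP : 0 < vnorm a * vnorm b by apply: mulr_gt0.
have low : - (vnorm a * vnorm b) <= vdot a b.
  have := vdot_ge0 (vnorm b *: a + vnorm a *: b).
  rewrite !vdotDl !vdotDr !vdotZl !vdotZr (vdotC b a) -!vnorm_sq => h.
  nra.
have half : vnorm a * vnorm b / 2 <= vdot a b.
  rewrite leNgt; apply/negP => hlt; apply: hang; rewrite /vangle.
  apply: acos_gt_pi3.
    by rewrite ler_pdivlMr // mulN1r.
  rewrite ltr_pdivrMr //; lra.
rewrite vdotDl !vdotDr !vdotNl !vdotNr (vdotC b a) -!vnorm_sq; lra.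
Qed.

Lemma lattice_sub d (M : 'M[RR]_(1 + d)) x y :
  lattice M x -> lattice M y -> lattice M (x - y).
Proof.
move=> [m ->] [m' ->]; exists (m - m').
rewrite -mulmxBl; congr (_ *m _); apply/matrixP => i j.
by rewrite !mxE intrB.
Qed.

Lemma mkvecB d (u u' : RR) (v v' : 'rV[RR]_d) :
  mkvec u v - mkvec u' v' = mkvec (u - u') (v - v').
Proof.
rewrite /mkvec opp_row_mx add_row_mx; congr row_mx.
by apply/matrixP => i j; rewrite !mxE.
Qed.

Theorem proposition6p3 (d : nat) (M : 'M[RR]_(1 + d)) (K : nat)
  (u : 'I_K -> RR) (v : 'I_K -> 'rV[RR]_d) :
  (3 <= d)%N ->
  \det M = 1 ->
  (* K = G_D(M) = |F_D(M)| *)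
  (FD (@unit_sphere d) M #= `I_K)%card ->
  (forall i, QD (@unit_sphere d) M (u i) (v i)) ->
  (* (V1) *)
  (forall i, 0 < vnorm (v i)) ->
  (forall i j : 'I_K, (i < j)%N -> vnorm (v i) < vnorm (v j)) ->
  (* (V2) *)
  (forall delta, FD (@unit_sphere d) M delta -> exists i, delta = vnorm (v i)) ->
  (* (V3) *)
  (forall i, exists t : RR, 0 < t < 1 /\
      QDt (@unit_sphere d) M t (u i) (v i) /\ isF (@unit_sphere d) M t (vnorm (v i))) ->
  forall i j : 'I_K,
    (-1 < u i /\ u i < u j /\ u j <= - (1 / 2)) \/
    (1 / 2 <= u j /\ u j < u i /\ u i < 1) ->
    pi / 3 < vangle (v i) (v j).
Proof.
move=> _ _ _ _ hpos hmono _ hV3 i j hcase.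
rewrite ltNge; apply/negP => hle.
have hang : ~ (pi / 3 < vangle (v i) (v j)) by move=> h; move: hle; rewrite leNgt h.
have hij : i != j.
  by apply/eqP => e; subst j; case: hcase => [[_ [h _]]|[_ [h _]]]; lra.
have hneq : vnorm (v i) != vnorm (v j).
  case: (ltngtP i j) => [h|h|h].
  - by rewrite lt_eqF // hmono.
  - by rewrite gt_eqF // hmono.
  - by move: hij; rewrite (val_inj h) eqxx.
have hw : v i - v j != 0.
  by apply: contra hneq; rewrite subr_eq0 => /eqP ->.
have hK := key (hpos i) (hpos j) hang.
have [ti [hti [[li [hui _]] [_ hFi]]]] := hV3 i.
have [tj [htj [[lj [huj _]] [_ hFj]]]] := hV3 j.
have hlat : lattice M (mkvec (u i - u j) (v i - v j)).
  by rewrite -mkvecB; apply: lattice_sub.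
have hcone := pos_cone_nz hw.
have hnw := vnorm_ge0 (v i - v j).
have hsq := vnorm_sq (v i - v j).
have hi := hpos i; have hj := hpos j.
move/andP: hui => [hui1 hui2]; move/andP: huj => [huj1 huj2].
case: (ltgtP (vnorm (v i)) (vnorm (v j))) => hc.
- have := hFj (u i - u j) (v i - v j); rewrite /QDt.
  have -> : - tj < u i - u j < 1 - tj.
    by apply/andP; case: hcase => [[? [? ?]]|[? [? ?]]]; split; lra.
  move=> /(_ (conj hlat (conj isT hcone))) h; nra.
- have := hFi (u i - u j) (v i - v j); rewrite /QDt.
  have -> : - ti < u i - u j < 1 - ti.
    by apply/andP; case: hcase => [[? [? ?]]|[? [? ?]]]; split; lra.
  move=> /(_ (conj hlat (conj isT hcone))) h; nra.
- by move: hneq; rewrite hc eqxx.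
Qed.
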